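(* Let $1\le k<n$ and $A\in\mathbb{M}_n$. Then $$\mathcal{P}(A)=\bigcup\{e^{i\theta}S(P):\ \theta\in[0,2\pi),\ P \text{ a rank-}k\text{ orthogonal projection with } |\operatorname{tr}(AP)|=w_k(A)\}.$$
   Context: For $A\in\mathbb{M}_n$: $W_k(A)=\{\operatorname{tr}(AP): P=P^*=P^2,\operatorname{tr}P=k\}$, $w_k(A)=\max\{|z|:z\in W_k(A)\}$. $A\parallel B$ means $w_k(A+\mu B)=w_k(A)+w_k(B)$ for some $|\mu|=1$. $\mathcal{P}(A)=\{B\in\mathbb{M}_n: B\parallel A\}$. For a rank-$k$ orthogonal projection $P$, $S(P)=\{B\in\mathbb{M}_n:\operatorname{tr}(BP)=w_k(B)\}$. *)

(* Defs.v *)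
From HB Require Import structures.
From mathcomp Require Import all_boot all_order all_algebra.
From mathcomp Require Import complex.
From mathcomp Require Import all_classical all_reals.
From mathcomp Require Import trigo.
Set Implicit Arguments. Unset Strict Implicit. Unset Printing Implicit Defensive.
Import Order.TTheory GRing.Theory Num.Theory.
Local Open Scope ring_scope.
Local Open Scope classical_set_scope.

Definition adjmx (R : realType) (n : nat) (A : 'M[R[i]]_n) : 'M[R[i]]_n :=
  map_mx (@conjc R) A^T.

(* P is an orthogonal projection of trace (= rank) k : P = P^* = P^2, tr P = k *)
Definition orth_proj (R : realType) (n k : nat) (P : 'M[R[i]]_n) : Prop :=
  [/\ P = adjmx P, P *m P = P & \tr P = k%:R].

Definition Wk (R : realType) (n k : nat) (A : 'M[R[i]]_n) : set R[i] :=
  [set z | exists P : 'M[R[i]]_n, orth_proj k P /\ z = \tr (A *m P)].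

(* k-numerical radius w_k(A) = max { |z| : z in W_k(A) } (taken as the sup,
   which is attained since the set of projections is compact) *)
Definition wk (R : realType) (n k : nat) (A : 'M[R[i]]_n) : R :=
  sup [set Normc.normc z | z in Wk k A].

Definition wk_parallel (R : realType) (n k : nat) (A B : 'M[R[i]]_n) : Prop :=
  exists mu : R[i], Normc.normc mu = 1 /\ wk k (A + mu *: B) = wk k A + wk k B.

Definition Pset (R : realType) (n k : nat) (A : 'M[R[i]]_n) : set 'M[R[i]]_n :=
  [set B | wk_parallel k B A].

Definition Sset (R : realType) (n k : nat) (P : 'M[R[i]]_n) : set 'M[R[i]]_n :=
  [set B | \tr (B *m P) = ((wk k B)%:C)%C].

Definition expi (R : realType) (t : R) : R[i] := (cos t +i* sin t)%C.

(* Main.v *)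
Require Import Defs.
From HB Require Import structures.
From mathcomp Require Import all_boot all_order all_algebra.
From mathcomp Require Import complex.
From mathcomp Require Import all_classical all_reals all_analysis.
From mathcomp Require Import ring lra.
Import Order.TTheory GRing.Theory Num.Theory.
Import numFieldNormedType.Exports.
Local Open Scope ring_scope.
Local Open Scope classical_set_scope.

Section Cont.
Variables (R : realType) (m : nat).
Local Notation T := ('rV[R]_m * 'rV[R]_m)%type.

Definition cc (f : T -> R[i]) :=
  continuous (fun v => complex.Re (f v)) /\ continuous (fun v => complex.Im (f v)).

Lemma cc_cst c : cc (fun _ => c).
Proof. by split; apply: cst_continuous. Qed.

Lemma ccD f g : cc f -> cc g -> cc (fun v => f v + g v).
Proof.
move=> [f1 f2] [g1 g2]; split.
  have -> : (fun v => complex.Re (f v + g v)) = (fun v => complex.Re (f v) + complex.Re (g v)).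
    by apply: funext => v; case: (f v) => ? ?; case: (g v).
  by move=> x; apply: cvgD; [exact: f1|exact: g1].
have -> : (fun v => complex.Im (f v + g v)) = (fun v => complex.Im (f v) + complex.Im (g v)).
  by apply: funext => v; case: (f v) => ? ?; case: (g v).
by move=> x; apply: cvgD; [exact: f2|exact: g2].
Qed.

Lemma ccN f : cc f -> cc (fun v => - f v).
Proof.
move=> [f1 f2]; split.
  have -> : (fun v => complex.Re (- f v)) = (fun v => - complex.Re (f v)).
    by apply: funext => v; case: (f v).
  by move=> x; apply: cvgN; exact: f1.
have -> : (fun v => complex.Im (- f v)) = (fun v => - complex.Im (f v)).
  by apply: funext => v; case: (f v).
by move=> x; apply: cvgN; exact: f2.
Qed.

Lemma ccM f g : cc f -> cc g -> cc (fun v => f v * g v).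
Proof.
move=> [f1 f2] [g1 g2]; split.
  have -> : (fun v => complex.Re (f v * g v)) = (fun v =>
     complex.Re (f v) * complex.Re (g v) - complex.Im (f v) * complex.Im (g v)).
    by apply: funext => v; case: (f v) => ? ?; case: (g v).
  by move=> x; apply: cvgB; apply: cvgM; [exact: f1|exact: g1|exact: f2|exact: g2].
have -> : (fun v => complex.Im (f v * g v)) = (fun v =>
     complex.Re (f v) * complex.Im (g v) + complex.Im (f v) * complex.Re (g v)).
  by apply: funext => v; case: (f v) => ? ?; case: (g v).
by move=> x; apply: cvgD; apply: cvgM; [exact: f1|exact: g2|exact: f2|exact: g1].
Qed.

Lemma cc_conj f : cc f -> cc (fun v => conjc (f v)).
Proof.
move=> [f1 f2]; split.
  have -> : (fun v => complex.Re (conjc (f v))) = (fun v => complex.Re (f v)).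
    by apply: funext => v; case: (f v).
  by [].
have -> : (fun v => complex.Im (conjc (f v))) = (fun v => - complex.Im (f v)).
  by apply: funext => v; case: (f v).
by move=> x; apply: cvgN; exact: f2.
Qed.

Lemma cc_sum (I : Type) (r : seq I) (F : I -> T -> R[i]) :
  (forall i, cc (F i)) -> cc (fun v => \sum_(i <- r) F i v).
Proof.
move=> hF; elim: r => [|a r IH].
  have -> : (fun v => \sum_(i <- [::]) F i v) = (fun _ => 0).
    by apply: funext => v; rewrite big_nil.
  exact: cc_cst.
have -> : (fun v => \sum_(i <- a :: r) F i v) = (fun v => F a v + \sum_(i <- r) F i v).
  by apply: funext => v; rewrite big_cons.
exact: ccD.
Qed.

Lemma cc_coord (idx : 'I_m) :
  cc (fun v : T => (v.1 ord0 idx +i* v.2 ord0 idx)%C).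
Proof.
split => /=.
  move=> x; apply: (@continuous_comp _ _ _ (fun v : T => v.1) (fun w : 'rV[R]_m => w ord0 idx)).
    exact: cvg_fst.
  exact: coord_continuous.
move=> x; apply: (@continuous_comp _ _ _ (fun v : T => v.2) (fun w : 'rV[R]_m => w ord0 idx)).
  exact: cvg_snd.
exact: coord_continuous.
Qed.

Lemma cc_closed f c : cc f -> closed [set v | f v = c].
Proof.
move=> [f1 f2].
have -> : [set v | f v = c] =
   (fun v => complex.Re (f v)) @^-1` [set x | x = complex.Re c] `&`
   (fun v => complex.Im (f v)) @^-1` [set x | x = complex.Im c].
  apply/seteqP; split => v /=.
    by move=> ->.
  by case: (f v) => a b; case: c => c d /= [-> ->].
apply: closedI; apply: preimage_closed.
- by move=> x _; exact: f1.
- exact: closed_eq.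
- by move=> x _; exact: f2.
- exact: closed_eq.
Qed.

Lemma cc_normc f : cc f -> continuous (fun v => Normc.normc (f v)).
Proof.
move=> [f1 f2].
have -> : (fun v => Normc.normc (f v)) =
  (fun v => Num.sqrt (complex.Re (f v) ^+ 2 + complex.Im (f v) ^+ 2)).
  by apply: funext => v; case: (f v).
move=> x; apply: (@continuous_comp _ _ _ (fun v => complex.Re (f v) ^+ 2 + complex.Im (f v) ^+ 2) (@Num.sqrt R)); last exact: sqrt_continuous.
by apply: cvgD; rewrite expr2; apply: cvgM; [exact: f1|exact: f1|exact: f2|exact: f2].
Qed.


Definition ccm (p : nat) (F : T -> 'M[R[i]]_p) := forall i j, cc (fun v => F v i j).
End Cont.

Lemma Re_sum (R : realType) (I : Type) (r : seq I) (F : I -> R[i]) :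
  complex.Re (\sum_(l <- r) F l) = \sum_(l <- r) complex.Re (F l).
Proof.
elim: r => [|a r IH]; first by rewrite !big_nil.
by rewrite !big_cons -IH; case: (F a) => ? ?; case: (\sum_(j <- r) F j).
Qed.

Section Attain.
Variables (R : realType) (n k : nat).
Local Notation m := (n * n)%N.
Local Notation T := ('rV[R]_m * 'rV[R]_m)%type.
Local Notation ccm := (@ccm R m n).
Local Notation cc := (@cc R m).

Definition toM (v : T) : 'M[R[i]]_n :=
  \matrix_(i < n, j < n) (v.1 ord0 (mxvec_index i j) +i* v.2 ord0 (mxvec_index i j))%C.
Definition ofM (P : 'M[R[i]]_n) : T :=
  (mxvec (map_mx (@complex.Re R) P), mxvec (map_mx (@complex.Im R) P)).

Lemma toMK P : toM (ofM P) = P.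
Proof. by apply/matrixP => i j; rewrite !mxE !mxvecE !mxE; case: (P i j). Qed.

Lemma entry_bound (P : 'M[R[i]]_n) : orth_proj k P -> forall i j,
  `|complex.Re (P i j)| <= 1 /\ `|complex.Im (P i j)| <= 1.
Proof.
case=> hA hM _ i j.
have hc a b : P b a = conjc (P a b) by rewrite {1}hA /adjmx !mxE.
have hii : P i i = \sum_l P i l * conjc (P i l).
  by rewrite -{1}hM mxE; apply: eq_bigr => l _; rewrite (hc i l).
have hIm : complex.Im (P i i) = 0.
  by have := hc i i; case: (P i i) => a b /= [] h; lra.
have hsq z : complex.Re (z * conjc z) = complex.Re z ^+ 2 + complex.Im z ^+ 2.
  by case: z => a b /=; ring.
set s := complex.Re (P i i).
have hs : s = \sum_l (complex.Re (P i l) ^+ 2 + complex.Im (P i l) ^+ 2).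
  by rewrite /s {1}hii Re_sum; apply: eq_bigr => l _; rewrite hsq.
have hge l : complex.Re (P i l) ^+ 2 + complex.Im (P i l) ^+ 2 <= s.
  rewrite hs (bigD1 l) //= lerDl; apply: sumr_ge0 => p _.
  by apply: addr_ge0; apply: sqr_ge0.
have s0 : 0 <= s by apply: le_trans (hge i); apply: addr_ge0; apply: sqr_ge0.
have s1 : s <= 1.
  have := hge i; rewrite -/s hIm; nra.
have := hge j.
move: (complex.Re (P i j)) (complex.Im (P i j)) => a b h.
by rewrite !ler_norml; split; apply/andP; split; nra.
Qed.



Lemma ccm_toM : ccm (toM).
Proof.
move=> i j.
have -> : (fun v => toM v i j) = (fun v : T => (v.1 ord0 (mxvec_index i j) +i* v.2 ord0 (mxvec_index i j))%C).
  by apply: funext => v; rewrite mxE.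
exact: cc_coord.
Qed.

Lemma ccm_cst (M : 'M[R[i]]_n) : ccm (fun _ => M).
Proof. by move=> i j; apply: cc_cst. Qed.

Lemma ccm_mul (F G : T -> 'M[R[i]]_n) : ccm F -> ccm G -> ccm (fun v => F v *m G v).
Proof.
move=> hF hG i j.
have -> : (fun v => (F v *m G v) i j) = (fun v => \sum_l F v i l * G v l j).
  by apply: funext => v; rewrite mxE.
by apply: cc_sum => l; apply: ccM.
Qed.

Lemma ccm_adj (F : T -> 'M[R[i]]_n) : ccm F -> ccm (fun v => adjmx (F v)).
Proof.
move=> hF i j.
have -> : (fun v => adjmx (F v) i j) = (fun v => conjc (F v j i)).
  by apply: funext => v; rewrite !mxE.
exact: cc_conj.
Qed.

Lemma cc_tr (F : T -> 'M[R[i]]_n) : ccm F -> cc (fun v => \tr (F v)).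
Proof. by move=> hF; apply: cc_sum => l; apply: hF. Qed.

Lemma ccm_closed (F G : T -> 'M[R[i]]_n) : ccm F -> ccm G ->
  closed [set v | F v = G v].
Proof.
move=> hF hG.
have -> : [set v | F v = G v] =
  \bigcap_(p in [set: 'I_n * 'I_n]) [set v | F v p.1 p.2 - G v p.1 p.2 = 0].
  apply/seteqP; split => v /=.
    by move=> h p _ /=; rewrite h subrr.
  by move=> h; apply/matrixP => i j; apply/eqP; rewrite -subr_eq0; apply/eqP; apply: (h (i, j)).
apply: closed_bigI => p _; apply: cc_closed; apply: ccD; last apply: ccN; [exact: hF|exact: hG].
Qed.

Definition Kset := [set v : T | orth_proj k (toM v)].

Lemma Kset_closed : closed Kset.
Proof.
have -> : Kset = [set v | toM v = adjmx (toM v)] `&` [set v | toM v *m toM v = toM v]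
    `&` [set v | \tr (toM v) = k%:R].
  apply/seteqP; split => v /=.
    by case=> h1 h2 h3.
  by case=> [[h1 h2] h3]; split.
apply: closedI; first apply: closedI.
- by apply: ccm_closed; [exact: ccm_toM| apply: ccm_adj; exact: ccm_toM].
- by apply: ccm_closed; [apply: ccm_mul; exact: ccm_toM| exact: ccm_toM].
- by apply: cc_closed; apply: cc_tr; exact: ccm_toM.
Qed.

Definition Bx := [set w : 'rV[R]_m | forall i, `[-1, 1]%classic (w ord0 i)].

Lemma Kset_compact : compact Kset.
Proof.
apply: (subclosed_compact Kset_closed (B := Bx `*` Bx)).
  have hB : compact Bx.
    exact: (@rV_compact R m (fun=> `[-1, 1]%classic) (fun _ => @segment_compact R _ _)).
  exact: compact_setX.
move=> v /= hv; split => idx; case/mxvec_indexP: idx => i j;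
  have [h1 h2] := entry_bound _ hv i j; move: h1 h2; rewrite mxE /= => h1 h2;
  by rewrite /= in_itv /= -ler_norml.
Qed.



Lemma pid_orth : (k <= n)%N -> orth_proj k (pid_mx k : 'M[R[i]]_n).
Proof.
move=> kn; split.
- by rewrite /adjmx tr_pid_mx map_pid_mx.
- by rewrite pid_mx_id.
- rewrite /mxtrace (eq_bigr (fun i : 'I_n => ((i < k)%N)%:R)); last first.
    by move=> i _; rewrite mxE eqxx.
  rewrite -(big_mkord xpredT (fun i => ((i < k)%N)%:R)) (big_cat_nat (leq0n k) kn) /=.
  have h2 : \sum_(k <= i < n) ((i < k)%N)%:R = 0 :> R[i].
    apply: big1_seq => i /andP[_]; rewrite mem_index_iota => /andP[ki _].
    by have -> : (i < k)%N = false by apply/negbTE; rewrite -leqNgt.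
  have h1 : \sum_(0 <= i < k) ((i < k)%N)%:R = k%:R :> R[i].
    rewrite (eq_big_seq (fun=> 1)); last first.
      by move=> i; rewrite mem_index_iota => /andP[_ ->].
    by rewrite sumr_const_nat subn0.
  by rewrite h1 h2 addr0.
Qed.

Lemma attain (M : 'M[R[i]]_n) : (k <= n)%N ->
  exists P0, orth_proj k P0 /\ forall P, orth_proj k P ->
    Normc.normc (\tr (M *m P)) <= Normc.normc (\tr (M *m P0)).
Proof.
move=> kn.
have K0 : Kset !=set0.
  by exists (ofM (pid_mx k)); rewrite /Kset /= toMK; apply: pid_orth.
have fc : {within Kset, continuous (fun v => Normc.normc (\tr (M *m toM v)))}.
  apply: continuous_subspaceT; apply: cc_normc; apply: cc_tr.
  by apply: ccm_mul; [exact: ccm_cst | exact: ccm_toM].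
have [c cK cmax] := compact_EVT_max K0 Kset_compact fc.
exists (toM c); split; first by rewrite inE in cK.
move=> P hP; have := cmax (ofM P); rewrite toMK; apply.
by rewrite inE /Kset /= toMK.
Qed.

End Attain.

Section Norms.
Variable R : realType.
Local Notation N := (@Normc.normc R).

Lemma N_ge0 (z : R[i]) : 0 <= N z.
Proof. by case: z => a b; apply: sqrtr_ge0. Qed.

Lemma N_tri (x y : R[i]) : N (x + y) <= N x + N y.
Proof.
have := ler_normD x y; rewrite !normc_def.
have -> : forall a b : R, (a%:C + b%:C = (a + b)%:C)%C by move=> a b; rewrite raddfD.
rewrite lecR.
by case: x => ? ?; case: y => ? ?.
Qed.

Lemma N_real (r : R) : 0 <= r -> N (r%:C)%C = r.
Proof. by move=> r0 /=; rewrite expr0n /= addr0 sqrtr_sqr ger0_norm. Qed.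

Lemma N_expi (t : R) : N (expi t) = 1.
Proof. by rewrite /= cos2Dsin2 sqrtr1. Qed.

Lemma expiJ (t : R) : conjc (expi t) * expi t = 1.
Proof.
apply/eqP; rewrite eq_complex /= !mulNr opprK.
have := cos2Dsin2 t; rewrite !expr2 => ->.
by rewrite eqxx /= mulrC subrr.
Qed.

Lemma N_conj (z : R[i]) : N (conjc z) = N z.
Proof. by case: z => a b /=; rewrite sqrrN. Qed.

Lemma polar (z : R[i]) : exists t : R, 0 <= t < 2 * pi /\ z = expi t * (N z)%:C%C.
Proof.
have pi0 : 0 < pi :> R by apply: pi_gt0.
have [->|z0] := eqVneq z 0.
  exists 0; split; first by rewrite lexx /= mulr_gt0.
  by rewrite Normc.normc0 mulr0.
case: z z0 => x y z0.
set r := N (x +i* y)%C.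
have r0 : 0 < r.
  rewrite lt_def N_ge0 andbT; apply/eqP => /Normc.eq0_normc h; by rewrite h eqxx in z0.
have rE : r ^+ 2 = x ^+ 2 + y ^+ 2.
  by rewrite /r /= sqr_sqrtr // addr_ge0 // sqr_ge0.
have rn0 : r != 0 by rewrite gt_eqF.
set a := x / r; set b := y / r.
have xE : x = a * r by rewrite /a divfK.
have yE : y = b * r by rewrite /b divfK.
have ab : a ^+ 2 + b ^+ 2 = 1.
  by rewrite /a /b !expr_div_n -mulrDl -rE divff // expf_neq0.
have a1 : -1 <= a <= 1 by apply/andP; split; nra.
have sa : Num.sqrt (1 - a ^+ 2) = `|b|.
  by rewrite -sqrtr_sqr; congr Num.sqrt; lra.
have ca : cos (acos a) = a by apply: acosK; rewrite in_itv.
have acos_le := acos_lepi a1.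
have acos_ge := acos_ge0 a1.
have [b0|b0] := leP 0 b.
  exists (acos a); split.
    by apply/andP; split => //; lra.
  rewrite /expi ca sin_acos // sa ger0_norm //.
  by apply/eqP; rewrite eq_complex /= !mulr0 subr0 add0r xE yE !eqxx.
have a_lt1 : a < 1 by nra.
have acos_gt : 0 < acos a by apply: acos_gt0; apply/andP; split; lra.
exists (2 * pi - acos a); split.
  by apply/andP; split; lra.
have two : 2 * pi = pi *+ 2 :> R by rewrite mulr_natl.
rewrite /expi cosB sinB two cos2pi sin2pi ca sin_acos // sa ltr0_norm //.
apply/eqP; rewrite eq_complex /= xE yE.
by apply/andP; split; apply/eqP; ring.
Qed.
End Norms.

Section Main.
Variables (R : realType) (n k : nat).
Hypothesis kn : (k <= n)%N.
Local Notation N := (@Normc.normc R).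
Implicit Types M A B C P : 'M[R[i]]_n.

Lemma wk_char M : exists P0, [/\ orth_proj k P0, wk k M = N (\tr (M *m P0)) &
  forall P, orth_proj k P -> N (\tr (M *m P)) <= wk k M].
Proof.
have [P0 [h0 hmax]] := @attain R n k M kn.
set a := N (\tr (M *m P0)).
set E := [set N z | z in Wk k M].
have aE : E a by exists (\tr (M *m P0)) => //; exists P0.
have ub : ubound E a by move=> x [z [P [hP ->]] <-]; apply: hmax.
have wa : wk k M = a.
  apply/le_anti/andP; split.
    by apply: ge_sup => //; exists a.
  by apply: sup_upper_bound => //; split; [exists a | exists a].
exists P0; split => //.
by move=> P hP; rewrite wa; apply: hmax.
Qed.

Lemma wk_ge0 M : 0 <= wk k M.
Proof. by have [P0 [_ -> _]] := wk_char M; apply: N_ge0. Qed.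

Lemma trZ (c : R[i]) M P : \tr ((c *: M) *m P) = c * \tr (M *m P).
Proof. by rewrite -scalemxAl mxtraceZ. Qed.

Lemma trD M1 M2 P : \tr ((M1 + M2) *m P) = \tr (M1 *m P) + \tr (M2 *m P).
Proof. by rewrite mulmxDl mxtraceD. Qed.

Lemma wkZ (c : R[i]) M : wk k (c *: M) = N c * wk k M.
Proof.
have [P1 [h1 e1 _]] := wk_char (c *: M).
have [P0 [h0 e0 m0]] := wk_char M.
have [? [_ _ m1]] := wk_char (c *: M).
apply/le_anti/andP; split.
  rewrite e1 trZ Normc.normcM; apply: ler_wpM2l; first exact: N_ge0.
  exact: m0.
by rewrite e0 -Normc.normcM -trZ; apply: m1.
Qed.

Lemma wkD M1 M2 : wk k (M1 + M2) <= wk k M1 + wk k M2.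
Proof.
have [P [h e _]] := wk_char (M1 + M2).
have [? [_ _ m1]] := wk_char M1.
have [? [_ _ m2]] := wk_char M2.
rewrite e trD; apply: (le_trans (N_tri _ _ _)).
by apply: lerD; [apply: m1 | apply: m2].
Qed.

End Main.

Arguments N_ge0 {R}. Arguments N_tri {R}. Arguments N_real {R}. Arguments N_expi {R}.
Arguments expiJ {R}. Arguments N_conj {R}. Arguments polar {R}.
Arguments trZ {R n}. Arguments trD {R n}.

Theorem mainTheorem3 (R : realType) (n k : nat) (A : 'M[R[i]]_n) :
  (1 <= k)%N -> (k < n)%N ->
  Pset k A =
  [set C | exists (theta : R) (P : 'M[R[i]]_n),
      [/\ 0 <= theta < 2 * pi, orth_proj k P,
          Normc.normc (\tr (A *m P)) = wk k A &
          exists2 B, Sset k P B & C = expi theta *: B]].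
Proof.
move=> k1 kn'; have kn : (k <= n)%N := ltnW kn'.
have wkc := @wk_char R n k kn.
have wkZ' := @wkZ R n k kn.
have wkD' := @wkD R n k kn.
have wk0 := @wk_ge0 R n k kn.
apply/seteqP; split => C /=.
- case=> mu [hmu he].
  have [P [hP eP _]] := wkc (C + mu *: A).
  have [? [_ _ mC]] := wkc C.
  have [? [_ _ mA]] := wkc A.
  have hzC := mC P hP; have haA := mA P hP.
  have h1 : wk k C + wk k A <= Normc.normc (\tr (C *m P)) + Normc.normc (\tr (A *m P)).
    rewrite -he eP trD trZ; apply: (le_trans (N_tri _ _)).
    by rewrite Normc.normcM hmu mul1r.
  have ezC : Normc.normc (\tr (C *m P)) = wk k C by lra.
  have eaA : Normc.normc (\tr (A *m P)) = wk k A by lra.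
  have [t [ht ez]] := polar (\tr (C *m P)).
  exists t, P; split => //.
  exists (conjc (expi t) *: C).
    change (\tr ((conjc (expi t) *: C) *m P) = (wk k (conjc (expi t) *: C))%:C%C).
    rewrite trZ {1}ez mulrA expiJ mul1r wkZ' N_conj N_expi mul1r ezC.
    done.
  by rewrite scalerA mulrC expiJ scale1r.
- case=> t [P [ht hP ha [B hB ->]]].
  set e := expi t; set a := \tr (A *m P).
  pose mu := if a == 0 then 1 else e * (Normc.normc a)%:C%C / a.
  have hmu : Normc.normc mu = 1.
    rewrite /mu; case: eqP => [_|/eqP a0]; first exact: Normc.normc1.
    rewrite !Normc.normcM Normc.normcV N_expi mul1r N_real ?N_ge0 // divff //.
    by apply/eqP => /Normc.eq0_normc /eqP; rewrite (negbTE a0).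
  have hmua : mu * a = e * (Normc.normc a)%:C%C.
    rewrite /mu; case: eqP => [->|/eqP a0]; first by rewrite Normc.normc0 !mulr0.
    by rewrite divfK.
  exists mu; split => //.
  have wC : wk k (e *: B) = wk k B by rewrite wkZ' N_expi mul1r.
  have wmA : wk k (mu *: A) = wk k A by rewrite wkZ' hmu mul1r.
  apply/le_anti/andP; split.
    by rewrite wC -wmA -{1}wC; apply: wkD'.
  have [? [_ _ m]] := wkc (e *: B + mu *: A).
  apply: le_trans (m P hP).
  rewrite trD !trZ hB hmua ha wC -mulrDr -raddfD Normc.normcM N_expi mul1r N_real //.
  by apply: addr_ge0; apply: wk0.
Qed.
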